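(* For every rational $c$ for which $f_c(x)=x^2+c$ has a rational $3$-cycle, the numerator of the rational number $c^3+2c^2+c+1$ (in lowest terms) is divisible by at least three distinct primes.
   Context: A rational $3$-cycle of $f_c$ is the orbit of a rational point of minimal period $3$ under $f_c$. *)

(* Defs.v *)
From mathcomp Require Import all_boot all_order all_algebra.
Set Implicit Arguments. Unset Strict Implicit. Unset Printing Implicit Defensive.
Import Order.TTheory GRing.Theory Num.Theory.
Local Open Scope ring_scope.

Definition fc (c : rat) (x : rat) : rat := x ^+ 2 + c.

Definition minimal_period (f : rat -> rat) (n : nat) (x : rat) : Prop :=
  (0 < n)%N /\ iter n f x = x /\ (forall k : nat, (0 < k < n)%N -> iter k f x <> x).

Definition has_rational_3cycle (c : rat) : Prop :=
  exists x : rat, minimal_period (fc c) 3 x.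

(* Main.v *)
Require Import Defs.
From mathcomp Require Import all_boot all_order all_algebra.
From mathcomp Require Import ring lra zify.
Import Order.TTheory GRing.Theory Num.Theory.
Local Open Scope ring_scope.
Definition pA (a b : int) : int := ((-1) * b^+3 + (-1) * a * b^+2 + a^+3).
Definition pB (a b : int) : int := (b^+3 + a * b^+2 + 2 * a^+2 * b + a^+3).
Definition pC (a b : int) : int := (b^+3 + 3 * a * b^+2 + 2 * a^+2 * b + a^+3).
Definition pR (a b : int) : int := (b^+9 + 7 * a * b^+8 + 21 * a^+2 * b^+7 + 26 * a^+3 * b^+6 + (-19) * a^+5 * b^+4 + (-9) * a^+6 * b^+3 + (-1) * a^+7 * b^+2 + (-2) * a^+8 * b + (-1) * a^+9).
Lemma id_A_a a b : b^+3 = ((-1)) * pA a b + ((-1) * b^+2 + a^+2) * a. Proof. rewrite /pA; ring. Qed.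
Lemma id_A_b a b : a^+3 = ((1)) * pA a b + (b^+2 + a * b) * b. Proof. rewrite /pA; ring. Qed.
Lemma id_A_s a b : b^+3 = ((-1)) * pA a b + ((-1) * a * b + a^+2) * (a + b). Proof. rewrite /pA; ring. Qed.
Lemma id_B_a a b : b^+3 = ((1)) * pB a b + ((-1) * b^+2 + (-2) * a * b + (-1) * a^+2) * a. Proof. rewrite /pB; ring. Qed.
Lemma id_B_b a b : a^+3 = ((1)) * pB a b + ((-1) * b^+2 + (-1) * a * b + (-2) * a^+2) * b. Proof. rewrite /pB; ring. Qed.
Lemma id_B_s a b : b^+3 = ((1)) * pB a b + ((-1) * a * b + (-1) * a^+2) * (a + b). Proof. rewrite /pB; ring. Qed.
Lemma id_C_a a b : b^+3 = ((1)) * pC a b + ((-3) * b^+2 + (-2) * a * b + (-1) * a^+2) * a. Proof. rewrite /pC; ring. Qed.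
Lemma id_C_b a b : a^+3 = ((1)) * pC a b + ((-1) * b^+2 + (-3) * a * b + (-2) * a^+2) * b. Proof. rewrite /pC; ring. Qed.
Lemma id_C_s a b : b^+3 = ((-1)) * pC a b + (2 * b^+2 + a * b + a^+2) * (a + b). Proof. rewrite /pC; ring. Qed.
Lemma id_R_a a b : b^+9 = ((1)) * pR a b + ((-7) * b^+8 + (-21) * a * b^+7 + (-26) * a^+2 * b^+6 + 19 * a^+4 * b^+4 + 9 * a^+5 * b^+3 + a^+6 * b^+2 + 2 * a^+7 * b + a^+8) * a. Proof. rewrite /pR; ring. Qed.
Lemma id_R_b a b : a^+9 = ((-1)) * pR a b + (b^+8 + 7 * a * b^+7 + 21 * a^+2 * b^+6 + 26 * a^+3 * b^+5 + (-19) * a^+5 * b^+3 + (-9) * a^+6 * b^+2 + (-1) * a^+7 * b + (-2) * a^+8) * b. Proof. rewrite /pR; ring. Qed.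
Lemma id_R_s a b : b^+9 = ((-1)) * pR a b + (2 * b^+8 + 5 * a * b^+7 + 16 * a^+2 * b^+6 + 10 * a^+3 * b^+5 + (-10) * a^+4 * b^+4 + (-9) * a^+5 * b^+3 + (-1) * a^+7 * b + (-1) * a^+8) * (a + b). Proof. rewrite /pR; ring. Qed.
Lemma bz_AB a b : 2^+1 * b^+5 = (2 * a * b + a^+2) * pA a b + (2 * b^+2 + (-1) * a^+2) * pB a b. Proof. rewrite /pA /pB; ring. Qed.
Lemma bz_AC a b : 2^+1 * b^+5 = ((-4) * b^+2 + (-3) * a * b + (-2) * a^+2) * pA a b + ((-2) * b^+2 + (-1) * a * b + 2 * a^+2) * pC a b. Proof. rewrite /pA /pC; ring. Qed.
Lemma bz_AR a b : 2^+3 * b^+11 = ((-9) * b^+8 + (-33) * a^+2 * b^+6 + (-30) * a^+3 * b^+5 + 20 * a^+4 * b^+4 + 18 * a^+5 * b^+3 + (-1) * a^+6 * b^+2 + 2 * a^+7 * b + 2 * a^+8) * pA a b + ((-1) * b^+2 + (-2) * a * b + 2 * a^+2) * pR a b. Proof. rewrite /pA /pR; ring. Qed.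
Lemma bz_BC a b : 2^+1 * b^+5 = (3 * b^+2 + 2 * a * b + a^+2) * pB a b + ((-1) * b^+2 + (-2) * a * b + (-1) * a^+2) * pC a b. Proof. rewrite /pB /pC; ring. Qed.
Lemma bz_BR a b : 2^+3 * b^+11 = (8 * b^+8 + (-9) * a * b^+7 + (-14) * a^+2 * b^+6 + 3 * a^+3 * b^+5 + 8 * a^+4 * b^+4 + a^+7 * b) * pB a b + (a * b) * pR a b. Proof. rewrite /pB /pR; ring. Qed.
Lemma bz_CR a b : 2^+3 * b^+11 = ((-343) * b^+8 + (-1665) * a * b^+7 + (-3500) * a^+2 * b^+6 + (-987) * a^+3 * b^+5 + 2293 * a^+4 * b^+4 + 1338 * a^+5 * b^+3 + 49 * a^+6 * b^+2 + 237 * a^+7 * b + 151 * a^+8) * pC a b + (351 * b^+2 + 237 * a * b + 151 * a^+2) * pR a b. Proof. rewrite /pC /pR; ring. Qed.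
Lemma rd_A_p a b : pR a b = ((-1) + (-15) * b^+3 + (-9) * b^+6 + (-3) * a * b^+2 + (-14) * a * b^+5 + (-2) * a^+2 * b + (-23) * a^+2 * b^+4 + (-1) * a^+3 + (-12) * a^+3 * b^+3 + (-2) * a^+4 * b^+2 + (-2) * a^+5 * b + (-1) * a^+6) * (pA a b - 1) - 1 + (-2) * a^+2 * b + b^+2 * ((-16) * b + (-24) * b^+4 + (-8) * b^+7 + (-4) * a + (-32) * a * b^+3 + (-16) * a * b^+6 + (-28) * a^+2 * b^+2 + (-16) * a^+2 * b^+5). Proof. rewrite /pR /pA; ring. Qed.
Lemma rd_A_m a b : pR a b = ((-1) + 15 * b^+3 + (-9) * b^+6 + 3 * a * b^+2 + (-14) * a * b^+5 + 2 * a^+2 * b + (-23) * a^+2 * b^+4 + a^+3 + (-12) * a^+3 * b^+3 + (-2) * a^+4 * b^+2 + (-2) * a^+5 * b + (-1) * a^+6) * (pA a b - (-1)) - (-1) + (-2) * a^+2 * b + b^+2 * ((-16) * b + 24 * b^+4 + (-8) * b^+7 + (-4) * a + 32 * a * b^+3 + (-16) * a * b^+6 + 28 * a^+2 * b^+2 + (-16) * a^+2 * b^+5). Proof. rewrite /pR /pA; ring. Qed.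
Lemma rd_B_p a b : pR a b = ((-1) + (-3) * b^+3 + 9 * b^+6 + (-3) * a * b^+2 + 14 * a * b^+5 + 2 * a^+2 * b + (-3) * a^+2 * b^+4 + (-1) * a^+3 + (-8) * a^+3 * b^+3 + (-1) * a^+6) * (pB a b - 1) - 1 + 4 * a^+2 * b + b^+2 * ((-2) * b + 12 * b^+4 + (-8) * b^+7 + (-2) * a + 20 * a * b^+3 + (-16) * a * b^+6 + 4 * a^+2 * b^+2 + (-8) * a^+2 * b^+5). Proof. rewrite /pR /pB; ring. Qed.
Lemma rd_B_m a b : pR a b = ((-1) + 3 * b^+3 + 9 * b^+6 + 3 * a * b^+2 + 14 * a * b^+5 + (-2) * a^+2 * b + (-3) * a^+2 * b^+4 + a^+3 + (-8) * a^+3 * b^+3 + (-1) * a^+6) * (pB a b - (-1)) - (-1) + 4 * a^+2 * b + b^+2 * ((-2) * b + (-12) * b^+4 + (-8) * b^+7 + (-2) * a + (-20) * a * b^+3 + (-16) * a * b^+6 + (-4) * a^+2 * b^+2 + (-8) * a^+2 * b^+5). Proof. rewrite /pR /pB; ring. Qed.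
Lemma rd_C_p a b : pR a b = ((-1) + (-19) * b^+3 + (-31) * b^+6 + a * b^+2 + 36 * a * b^+5 + 2 * a^+2 * b + (-1) * a^+2 * b^+4 + (-1) * a^+3 + (-12) * a^+3 * b^+3 + 2 * a^+4 * b^+2 + (-1) * a^+6) * (pC a b - 1) - 1 + 4 * a^+2 * b + b^+2 * ((-18) * b + (-12) * b^+4 + 32 * b^+7 + 4 * a + 92 * a * b^+3 + 64 * a * b^+6 + 32 * a^+2 * b^+2 + (-24) * a^+2 * b^+5). Proof. rewrite /pR /pC; ring. Qed.
Lemma rd_C_m a b : pR a b = ((-1) + 19 * b^+3 + (-31) * b^+6 + (-1) * a * b^+2 + 36 * a * b^+5 + (-2) * a^+2 * b + (-1) * a^+2 * b^+4 + a^+3 + (-12) * a^+3 * b^+3 + 2 * a^+4 * b^+2 + (-1) * a^+6) * (pC a b - (-1)) - (-1) + 4 * a^+2 * b + b^+2 * ((-18) * b + 12 * b^+4 + 32 * b^+7 + 4 * a + (-92) * a * b^+3 + 64 * a * b^+6 + (-32) * a^+2 * b^+2 + (-24) * a^+2 * b^+5). Proof. rewrite /pR /pC; ring. Qed.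
Lemma keyG (x c : rat) : (4 * (x + x^+2 + c)^+2 * (x + x^+2 + c + 1)^+2 * c + 1 * (x + x^+2 + c)^+0 + 4 * (x + x^+2 + c)^+1 + 9 * (x + x^+2 + c)^+2 + 8 * (x + x^+2 + c)^+3 + 4 * (x + x^+2 + c)^+4 + 2 * (x + x^+2 + c)^+5 + 1 * (x + x^+2 + c)^+6) * (x^+2 - x + c) = (((x^+2 + c)^+2 + c)^+2 + c - x) * ((1) + 3 * c + 4 * c^+2 + c^+3 + 3 * x + 10 * x * c + 5 * x * c^+2 + 9 * x^+2 + 15 * x^+2 * c + 3 * x^+2 * c^+2 + 13 * x^+3 + 10 * x^+3 * c + 11 * x^+4 + 3 * x^+4 * c + 5 * x^+5 + x^+6).
Proof. ring. Qed.

Lemma pdvdM (p : nat) (x y : int) : prime p -> (p %| x * y)%Z -> (p %| x)%Z \/ (p %| y)%Z.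
Proof. by move=> pp; rewrite !dvdzE abszM Euclid_dvdM // => /orP. Qed.

Lemma pdvdX (p : nat) (x : int) n : prime p -> (p %| x ^+ n)%Z -> (p %| x)%Z.
Proof. by move=> pp; rewrite !dvdzE abszX Euclid_dvdX // => /andP[]. Qed.

Lemma comb (p : nat) (W U X V Y : int) : (p %| X)%Z -> (p %| Y)%Z -> W = U * X + V * Y -> (p %| W)%Z.
Proof. by move=> hx hy ->; apply: rpredD; apply: dvdz_mull. Qed.

Lemma dvdz_wit (d m q : int) : m = q * d -> (d %| m)%Z.
Proof. by move=> ->; apply/dvdzP; exists q. Qed.

Lemma two_dvd (a b : int) : (2 %| a * b * (a + b))%Z.
Proof.
have ha := divz_eq a 2; have hb := divz_eq b 2.
have : (0 <= (a %% 2)%Z < 2) by rewrite modz_ge0 // ltz_pmod.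
have : (0 <= (b %% 2)%Z < 2) by rewrite modz_ge0 // ltz_pmod.
move=> rb ra.
have [ea|ea] : (a %% 2)%Z = 0 \/ (a %% 2)%Z = 1 by lia.
- apply: (@dvdz_wit _ _ ((a %/ 2)%Z * b * (a + b))); rewrite {1}ha ea; ring.
have [eb|eb] : (b %% 2)%Z = 0 \/ (b %% 2)%Z = 1 by lia.
- apply: (@dvdz_wit _ _ (a * (b %/ 2)%Z * (a + b))); rewrite {1}hb eb; ring.
apply: (@dvdz_wit _ _ (a * b * ((a %/ 2)%Z + (b %/ 2)%Z + 1))).
rewrite {2}ha {2}hb ea eb; ring.
Qed.

Lemma prime_dvd2 (p : nat) : prime p -> (p %| 2)%Z -> p = 2%N.
Proof. move=> pp; rewrite dvdzE /= => h; apply/eqP; by rewrite -(dvdn_prime2 pp). Qed.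

Definition cop (a b : int) := forall q : nat, prime q -> (q %| a)%Z -> (q %| b)%Z -> False.

Lemma cop_of (a b : int) : coprime `|a| `|b| -> cop a b.
Proof.
move=> c q pq; rewrite !dvdzE /= => ha hb.
have : (q %| gcdn `|a| `|b|)%N by rewrite dvdn_gcd ha hb.
by rewrite (eqP c) dvdn1 => /eqP q1; rewrite q1 in pq.
Qed.

Lemma good_gen (p : nat) (a b X : int) n m k :
  prime p -> cop a b ->
  (exists U V, b^+n = U * X + V * a) -> (exists U V, a^+m = U * X + V * b) ->
  (exists U V, b^+k = U * X + V * (a+b)) ->
  (p %| X)%Z -> ~ (p %| 2 * a * b * (a + b))%Z.
Proof.
move=> pp cab [U1 [V1 e1]] [U2 [V2 e2]] [U3 [V3 e3]] pX.
have na : ~ (p %| a)%Z.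
  move=> pa; apply: (cab p pp pa); apply: (@pdvdX p b n pp); exact: comb pX pa e1.
have nb : ~ (p %| b)%Z.
  move=> pb; apply: (cab p pp _ pb); apply: (@pdvdX p a m pp); exact: comb pX pb e2.
have ns : ~ (p %| a + b)%Z.
  move=> ps; have pb : (p %| b)%Z.
    apply: (@pdvdX p b k pp); exact: comb pX ps e3.
  apply: na; apply: (@comb p a 1 (a + b) (-1) b ps pb); ring.
have D := @pdvdM p _ _ pp.
have n2 : ~ (p %| 2)%Z.
  move=> p2; have e := @prime_dvd2 p pp p2.
  have h3 : (p %| a * b * (a + b))%Z by rewrite e; exact: two_dvd.
  case: (D _ _ h3) => // h4; case: (D _ _ h4) => //.
move=> h; case: (D _ _ h) => // h1; case: (D _ _ h1) => // h2.
by case: (D _ _ h2).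
Qed.

Lemma pair_gen (p : nat) (a b X Y U V : int) j n : prime p -> ~ (p %| 2 * a * b * (a + b))%Z ->
  (p %| X)%Z -> (p %| Y)%Z -> 2^+j * b^+n = U * X + V * Y -> False.
Proof.
move=> pp g hX hY e; have h : (p %| 2^+j * b^+n)%Z by rewrite e; exact: comb hX hY (erefl _).
case: (@pdvdM p _ _ pp h) => /(@pdvdX p _ _ pp) h'; apply: g.
  by apply: dvdz_mulr; apply: dvdz_mulr; apply: dvdz_mulr.
by apply: dvdz_mulr; apply: dvdz_mull.
Qed.

Lemma good_A (p : nat) (a b : int) : prime p -> cop a b -> (p %| pA a b)%Z -> ~ (p %| 2 * a * b * (a + b))%Z.
Proof.
move=> pp c h; apply: (@good_gen p a b _ _ _ _ pp c _ _ _ h).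
- by do 2 eexists; apply: id_A_a.
- by do 2 eexists; apply: id_A_b.
- by do 2 eexists; apply: id_A_s.
Qed.

Lemma good_B (p : nat) (a b : int) : prime p -> cop a b -> (p %| pB a b)%Z -> ~ (p %| 2 * a * b * (a + b))%Z.
Proof.
move=> pp c h; apply: (@good_gen p a b _ _ _ _ pp c _ _ _ h).
- by do 2 eexists; apply: id_B_a.
- by do 2 eexists; apply: id_B_b.
- by do 2 eexists; apply: id_B_s.
Qed.

Lemma good_C (p : nat) (a b : int) : prime p -> cop a b -> (p %| pC a b)%Z -> ~ (p %| 2 * a * b * (a + b))%Z.
Proof.
move=> pp c h; apply: (@good_gen p a b _ _ _ _ pp c _ _ _ h).
- by do 2 eexists; apply: id_C_a.
- by do 2 eexists; apply: id_C_b.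
- by do 2 eexists; apply: id_C_s.
Qed.

Lemma good_R (p : nat) (a b : int) : prime p -> cop a b -> (p %| pR a b)%Z -> ~ (p %| 2 * a * b * (a + b))%Z.
Proof.
move=> pp c h; apply: (@good_gen p a b _ _ _ _ pp c _ _ _ h).
- by do 2 eexists; apply: id_R_a.
- by do 2 eexists; apply: id_R_b.
- by do 2 eexists; apply: id_R_s.
Qed.

Lemma pair_AB (p : nat) (a b : int) : prime p -> cop a b -> (p %| pA a b)%Z -> (p %| pB a b)%Z -> False.
Proof. move=> pp c hX hY; exact: (@pair_gen p a b _ _ _ _ _ _ pp (@good_A p a b pp c hX) hX hY (bz_AB a b)). Qed.

Lemma pair_AC (p : nat) (a b : int) : prime p -> cop a b -> (p %| pA a b)%Z -> (p %| pC a b)%Z -> False.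
Proof. move=> pp c hX hY; exact: (@pair_gen p a b _ _ _ _ _ _ pp (@good_A p a b pp c hX) hX hY (bz_AC a b)). Qed.

Lemma pair_AR (p : nat) (a b : int) : prime p -> cop a b -> (p %| pA a b)%Z -> (p %| pR a b)%Z -> False.
Proof. move=> pp c hX hY; exact: (@pair_gen p a b _ _ _ _ _ _ pp (@good_A p a b pp c hX) hX hY (bz_AR a b)). Qed.

Lemma pair_BC (p : nat) (a b : int) : prime p -> cop a b -> (p %| pB a b)%Z -> (p %| pC a b)%Z -> False.
Proof. move=> pp c hX hY; exact: (@pair_gen p a b _ _ _ _ _ _ pp (@good_B p a b pp c hX) hX hY (bz_BC a b)). Qed.

Lemma pair_BR (p : nat) (a b : int) : prime p -> cop a b -> (p %| pB a b)%Z -> (p %| pR a b)%Z -> False.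
Proof. move=> pp c hX hY; exact: (@pair_gen p a b _ _ _ _ _ _ pp (@good_B p a b pp c hX) hX hY (bz_BR a b)). Qed.

Lemma pair_CR (p : nat) (a b : int) : prime p -> cop a b -> (p %| pC a b)%Z -> (p %| pR a b)%Z -> False.
Proof. move=> pp c hX hY; exact: (@pair_gen p a b _ _ _ _ _ _ pp (@good_C p a b pp c hX) hX hY (bz_CR a b)). Qed.

Lemma unit_AB a b : 0 < b -> a != 0 -> a + b != 0 -> (pA a b = 1 \/ pA a b = -1) -> (pB a b = 1 \/ pB a b = -1) -> False.
Proof.
have e : pB a b - pA a b = 2 * b * (a^+2 + a*b + b^+2) by rewrite /pA /pB; ring.
move=> hb /eqP ha /eqP hs hA hB.
have q4 : 4 * (a^+2 + a*b + b^+2) = (2*a+b)^+2 + 3 * b^+2 by ring.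
have q1 : 1 <= a^+2 + a*b + b^+2 by nia.
have bq : b * (a^+2 + a*b + b^+2) = 1 by case: hA hB => -> [] -> in e; nia.
have b1 : b = 1 by nia.
rewrite b1 in bq; have : a * (a + 1) = 0 by rewrite -[RHS](subrr 1) -{2}bq; ring.
by move/eqP; rewrite mulf_eq0 => /orP[]/eqP; [|rewrite b1 in hs].
Qed.
Lemma unit_AC a b : 0 < b -> a != 0 -> a + b != 0 -> (pA a b = 1 \/ pA a b = -1) -> (pC a b = 1 \/ pC a b = -1) -> False.
Proof.
have e : pC a b - pA a b = 2 * b * (a + b)^+2 by rewrite /pA /pC; ring.
move=> hb /eqP ha /eqP hs hA hB.
have s1 : 1 <= (a + b)^+2 by nia.
have bq : b * (a + b)^+2 = 1 by case: hA hB => -> [] -> in e; nia.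
have b1 : b = 1 by nia.
have a2 : a = -2 by rewrite b1 in bq hs; nia.
by move: hA; rewrite /pA a2 b1; lia.
Qed.
Lemma unit_BC a b : 0 < b -> a != 0 -> a + b != 0 -> (pB a b = 1 \/ pB a b = -1) -> (pC a b = 1 \/ pC a b = -1) -> False.
Proof.
have e : pC a b - pB a b = 2 * a * b^+2 by rewrite /pB /pC; ring.
move=> hb /eqP ha /eqP hs hA hB.
have bq : a * b^+2 = 1 \/ a * b^+2 = -1 by case: hA hB => -> [] -> in e; nia.
have b1 : b = 1 by nia.
have a2 : a = 1 by rewrite b1 in bq hs; nia.
by move: hA; rewrite /pB a2 b1; lia.
Qed.

Lemma Rb_gen (a b X Q S k e d : int) : 0 < b -> coprime `|a| `|b| -> (e = 1 \/ e = -1) -> (d = 1 \/ d = -1) -> X = e -> pR a b = d -> pR a b = Q * (X - e) - e + k * a^+2 * b + b^+2 * S -> (b %| 2)%Z \/ (b %| k)%Z.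
Proof.
move=> hb c he hd hX hR id.
have h : b * (k * a^+2 + b * S) = d + e.
  by rewrite -hR id hX subrr mulr0 add0r; ring.
have [h0|hn] := eqVneq (d + e) 0.
  right; rewrite h0 in h.
  have h1 : k * a^+2 = (- S) * b.
    move/eqP: h; rewrite mulf_eq0 (negbTE (lt0r_neq0 hb)) /= => /eqP h.
    by rewrite -[LHS]subr0 -h; ring.
  have : (b %| k * a^+2)%Z by apply/dvdzP; exists (- S).
  rewrite !dvdzE abszM abszX Gauss_dvdl //.
  by rewrite coprimeXr // coprime_sym.
left; case: he hd h hn => -> [] -> h hn; rewrite ?subrr ?addrN ?addNr ?eqxx // in hn.
- by apply/dvdzP; exists (k*a^+2+b*S); rewrite mulrC h.
- by apply/dvdzP; exists (-(k*a^+2+b*S)); rewrite mulNr mulrC h.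
Qed.

Arguments Rb_gen {a b X Q S k e d}.

Lemma div4 (b : int) : 0 < b -> (b %| 4)%Z -> b = 1 \/ b = 2 \/ b = 4.
Proof.
case: b => // n _; rewrite dvdzE /= => h.
have : (n <= 4)%N by apply: dvdn_leq.
case: n h => [|[|[|[|[|n]]]]] //= _ _; try (by left); try (by right; left); try (by right; right).
Qed.

Lemma b124 (a b X Q S k e d : int) : 0 < b -> coprime `|a| `|b| -> (e = 1 \/ e = -1) -> (d = 1 \/ d = -1) -> X = e -> pR a b = d -> pR a b = Q * (X - e) - e + k * a^+2 * b + b^+2 * S -> (k %| 4)%Z -> b = 1 \/ b = 2 \/ b = 4.
Proof.
move=> hb c he hd hX hR id hk; apply: div4 => //.
case: (Rb_gen hb c he hd hX hR id) => h.
  by apply: dvdz_trans h _; apply/dvdzP; exists 2.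
exact: dvdz_trans h hk.
Qed.
Arguments b124 {a b X Q S k e d}.

Ltac fin_tac a ha hs hX hR :=
  let n := fresh "n" in let bd := fresh "bd" in
  move/eqP: ha => ha; move/eqP: hs => hs;
  unfold pA, pB, pC, pR in hX, hR;
  have bd : -12 <= a <= 12; [clear hR; nia|];
  move: ha hs hX hR bd; case: a => n; (by do 13 (case: n => [|n]; first lia); lia).

Lemma unit_AR a b : 0 < b -> a != 0 -> a + b != 0 -> coprime `|a| `|b| -> (pA a b = 1 \/ pA a b = -1) -> (pR a b = 1 \/ pR a b = -1) -> False.
Proof.
move=> hb ha hs c hX hR.
have hk : ((-2 : int) %| 4)%Z by apply/dvdzP; exists (-2).
have hbv : b = 1 \/ b = 2 \/ b = 4.
  case: hR => hR'; case: hX => hX'.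
  - by apply: (b124 hb c _ _ hX' hR' (rd_A_p a b) hk); auto.
  - by apply: (b124 hb c _ _ hX' hR' (rd_A_m a b) hk); auto.
  - by apply: (b124 hb c _ _ hX' hR' (rd_A_p a b) hk); auto.
  - by apply: (b124 hb c _ _ hX' hR' (rd_A_m a b) hk); auto.
clear hb c; case: hbv => [E|[E|E]]; subst b; fin_tac a ha hs hX hR.
Qed.

Lemma unit_BR a b : 0 < b -> a != 0 -> a + b != 0 -> coprime `|a| `|b| -> (pB a b = 1 \/ pB a b = -1) -> (pR a b = 1 \/ pR a b = -1) -> False.
Proof.
move=> hb ha hs c hX hR.
have hk : ((4 : int) %| 4)%Z by apply/dvdzP; exists (1).
have hbv : b = 1 \/ b = 2 \/ b = 4.
  case: hR => hR'; case: hX => hX'.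
  - by apply: (b124 hb c _ _ hX' hR' (rd_B_p a b) hk); auto.
  - by apply: (b124 hb c _ _ hX' hR' (rd_B_m a b) hk); auto.
  - by apply: (b124 hb c _ _ hX' hR' (rd_B_p a b) hk); auto.
  - by apply: (b124 hb c _ _ hX' hR' (rd_B_m a b) hk); auto.
clear hb c; case: hbv => [E|[E|E]]; subst b; fin_tac a ha hs hX hR.
Qed.

Lemma unit_CR a b : 0 < b -> a != 0 -> a + b != 0 -> coprime `|a| `|b| -> (pC a b = 1 \/ pC a b = -1) -> (pR a b = 1 \/ pR a b = -1) -> False.
Proof.
move=> hb ha hs c hX hR.
have hk : ((4 : int) %| 4)%Z by apply/dvdzP; exists (1).
have hbv : b = 1 \/ b = 2 \/ b = 4.
  case: hR => hR'; case: hX => hX'.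
  - by apply: (b124 hb c _ _ hX' hR' (rd_C_p a b) hk); auto.
  - by apply: (b124 hb c _ _ hX' hR' (rd_C_m a b) hk); auto.
  - by apply: (b124 hb c _ _ hX' hR' (rd_C_p a b) hk); auto.
  - by apply: (b124 hb c _ _ hX' hR' (rd_C_m a b) hk); auto.
clear hb c; case: hbv => [E|[E|E]]; subst b; fin_tac a ha hs hX hR.
Qed.

Lemma unit_or_prime (a b X : int) : (forall p : nat, prime p -> (p %| X)%Z -> ~ (p %| 2 * a * b * (a + b))%Z) ->
  (X = 1 \/ X = -1) \/ exists p : nat, prime p /\ (p %| X)%Z.
Proof.
move=> h; have [X0|Xn0] := eqVneq X 0.
  exfalso; apply: (h 2%N) => //; first by rewrite X0 dvdz0.
  by apply: dvdz_mulr; apply: dvdz_mulr; apply: dvdz_mulr; apply: dvdzz.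
case: (ltngtP `|X|%N 1) => [lt|gt|eq].
- by move: lt Xn0; rewrite ltnS leqn0 absz_eq0 => ->.
- right; exists (pdiv `|X|); split; first exact: pdiv_prime.
  by rewrite dvdzE /=; exact: pdiv_dvd.
- left; case: X eq {h Xn0} => n /= e.
    by left; rewrite e.
  by right; case: n e.
Qed.

Lemma pick3 (G : nat -> Prop) (X Y Z : int) :
  (forall p : nat, prime p -> (p %| X)%Z -> G p) ->
  (forall p : nat, prime p -> (p %| Y)%Z -> G p) ->
  (forall p : nat, prime p -> (p %| Z)%Z -> G p) ->
  (forall p : nat, prime p -> (p %| X)%Z -> (p %| Y)%Z -> False) ->
  (forall p : nat, prime p -> (p %| X)%Z -> (p %| Z)%Z -> False) ->
  (forall p : nat, prime p -> (p %| Y)%Z -> (p %| Z)%Z -> False) ->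
  (exists p : nat, prime p /\ (p %| X)%Z) ->
  (exists p : nat, prime p /\ (p %| Y)%Z) ->
  (exists p : nat, prime p /\ (p %| Z)%Z) ->
  exists p1 p2 p3 : nat, [/\ prime p1, prime p2 & prime p3] /\
    [/\ p1 != p2, p1 != p3 & p2 != p3] /\ [/\ G p1, G p2 & G p3].
Proof.
move=> gX gY gZ dXY dXZ dYZ [p [pp hp]] [q [pq hq]] [r [pr hr]].
exists p, q, r; split; first by [].
split; last by split; [apply: gX|apply: gY|apply: gZ].
split; apply/eqP => E; subst.
- exact: dXY pp hp hq.
- exact: dXZ pp hp hr.
- exact: dYZ pq hq hr.
Qed.


Arguments cop_of {a b}.
Arguments good_A {p a b}.
Arguments good_B {p a b}.
Arguments good_C {p a b}.
Arguments good_R {p a b}.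
Arguments pair_AB {p a b}.
Arguments pair_AC {p a b}.
Arguments pair_AR {p a b}.
Arguments pair_BC {p a b}.
Arguments pair_BR {p a b}.
Arguments pair_CR {p a b}.
Arguments unit_AB {a b}.
Arguments unit_AC {a b}.
Arguments unit_BC {a b}.
Arguments unit_AR {a b}.
Arguments unit_BR {a b}.
Arguments unit_CR {a b}.
Arguments unit_or_prime {a b X}.
Arguments pick3 {G X Y Z}.

Lemma core (a b : int) : 0 < b -> a != 0 -> a + b != 0 -> coprime `|a| `|b| ->
  exists p1 p2 p3 : nat, [/\ prime p1, prime p2 & prime p3] /\
    [/\ p1 != p2, p1 != p3 & p2 != p3] /\
    [/\ (p1 %| pA a b * pB a b * pC a b * pR a b)%Z /\ ~ (p1 %| 2 * a * b * (a + b))%Z,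
        (p2 %| pA a b * pB a b * pC a b * pR a b)%Z /\ ~ (p2 %| 2 * a * b * (a + b))%Z &
        (p3 %| pA a b * pB a b * pC a b * pR a b)%Z /\ ~ (p3 %| 2 * a * b * (a + b))%Z].
Proof.
move=> hb ha hs c; have cp := cop_of c.
set G := fun p : nat => (p %| pA a b * pB a b * pC a b * pR a b)%Z /\ ~ (p %| 2 * a * b * (a + b))%Z.
have gA : forall p : nat, prime p -> (p %| pA a b)%Z -> G p.
  move=> p pp h; split; last exact: good_A pp cp h.
  by apply: dvdz_mulr; apply: dvdz_mulr; apply: dvdz_mulr.
have gB : forall p : nat, prime p -> (p %| pB a b)%Z -> G p.
  move=> p pp h; split; last exact: good_B pp cp h.
  by apply: dvdz_mulr; apply: dvdz_mulr; apply: dvdz_mull.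
have gC : forall p : nat, prime p -> (p %| pC a b)%Z -> G p.
  move=> p pp h; split; last exact: good_C pp cp h.
  by apply: dvdz_mulr; apply: dvdz_mull.
have gR : forall p : nat, prime p -> (p %| pR a b)%Z -> G p.
  move=> p pp h; split; last exact: good_R pp cp h.
  by apply: dvdz_mull.
have dAB : forall p : nat, prime p -> (p %| pA a b)%Z -> (p %| pB a b)%Z -> False.
  by move=> p pp; apply: pair_AB pp cp.
have dAC : forall p : nat, prime p -> (p %| pA a b)%Z -> (p %| pC a b)%Z -> False.
  by move=> p pp; apply: pair_AC pp cp.
have dAR : forall p : nat, prime p -> (p %| pA a b)%Z -> (p %| pR a b)%Z -> False.
  by move=> p pp; apply: pair_AR pp cp.
have dBC : forall p : nat, prime p -> (p %| pB a b)%Z -> (p %| pC a b)%Z -> False.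
  by move=> p pp; apply: pair_BC pp cp.
have dBR : forall p : nat, prime p -> (p %| pB a b)%Z -> (p %| pR a b)%Z -> False.
  by move=> p pp; apply: pair_BR pp cp.
have dCR : forall p : nat, prime p -> (p %| pC a b)%Z -> (p %| pR a b)%Z -> False.
  by move=> p pp; apply: pair_CR pp cp.
have [uA|eA] := unit_or_prime (fun p pp h => good_A pp cp h).
  have [uB|eB] := unit_or_prime (fun p pp h => good_B pp cp h).
    by case: (unit_AB hb ha hs uA uB).
  have [uC|eC] := unit_or_prime (fun p pp h => good_C pp cp h).
    by case: (unit_AC hb ha hs uA uC).
  have [uR|eR] := unit_or_prime (fun p pp h => good_R pp cp h).
    by case: (unit_AR hb ha hs c uA uR).
  exact: (pick3 gB gC gR dBC dBR dCR eB eC eR).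
have [uB|eB] := unit_or_prime (fun p pp h => good_B pp cp h).
  have [uC|eC] := unit_or_prime (fun p pp h => good_C pp cp h).
    by case: (unit_BC hb ha hs uB uC).
  have [uR|eR] := unit_or_prime (fun p pp h => good_R pp cp h).
    by case: (unit_BR hb ha hs c uB uR).
  exact: (pick3 gA gC gR dAC dAR dCR eA eC eR).
have [uC|eC] := unit_or_prime (fun p pp h => good_C pp cp h).
  have [uR|eR] := unit_or_prime (fun p pp h => good_R pp cp h).
    by case: (unit_CR hb ha hs c uC uR).
  exact: (pick3 gA gB gR dAB dAR dBR eA eB eR).
exact: (pick3 gA gB gC dAB dAC dBC eA eB eC).
Qed.

Definition Pu (u : rat) : rat := 1 + 4*u + 9*u^+2 + 8*u^+3 + 4*u^+4 + 2*u^+5 + u^+6.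

Lemma cycle_param (c : rat) : has_rational_3cycle c ->
  exists u : rat, u != 0 /\ u + 1 != 0 /\ 4 * u^+2 * (u + 1)^+2 * c + Pu u = 0.
Proof.
case=> x [_ [h3 hk]].
have h1 : x^+2 + c != x by apply/eqP; apply: (hk 1%N).
rewrite /= /fc in h3.
have K := keyG x c; rewrite h3 subrr mul0r in K.
have hf : x^+2 - x + c != 0.
  by apply: contra h1 => /eqP h; apply/eqP; rewrite -[RHS]addr0 -h; ring.
have G0 : 4 * (x + x^+2 + c)^+2 * (x + x^+2 + c + 1)^+2 * c + Pu (x + x^+2 + c) = 0.
  move/eqP: K; rewrite mulf_eq0 (negbTE hf) orbF => /eqP <-; rewrite /Pu; ring.
exists (x + x^+2 + c); split; last split; last exact: G0.
- apply/eqP => u0; move: G0; rewrite u0 /Pu; apply/eqP.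
  by rewrite !(expr0n, mul0r, mulr0, add0r, addr0) oner_eq0.
- apply/eqP => u1; have u1' : x + x^+2 + c = -1 by rewrite -[RHS]add0r -u1; ring.
  move: G0; rewrite u1' /Pu; apply/eqP; rewrite (_ : -1 + 1 = 0 :> rat) ?subrr //.
  by rewrite expr0n /= mulr0 mul0r add0r; apply/eqP => /(congr1 (fun q : rat => q)); move/eqP; rewrite -[_ == 0]/false.
Qed.

Lemma key_rat (c : rat) (a b : int) : (b%:~R : rat) != 0 ->
  4 * (a%:~R / b%:~R)^+2 * (a%:~R / b%:~R + 1)^+2 * c + Pu (a%:~R / b%:~R) = 0 ->
  (c^+3 + 2 * c^+2 + c + 1) * ((2 * a * b * (a + b))^+6)%:~R
    = (pA a b * pB a b * pC a b * pR a b)%:~R.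
Proof.
move=> b0 hG.
set al : rat := a%:~R; set be : rat := b%:~R.
set D := 4 * al^+2 * be^+2 * (al + be)^+2.
have hz : c * D = - (al^+6 + 2 * al^+5 * be + 4 * al^+4 * be^+2 + 8 * al^+3 * be^+3 + 9 * al^+2 * be^+4 + 4 * al * be^+5 + be^+6).
  have e : be^+6 * (4 * (al / be)^+2 * (al / be + 1)^+2 * c + Pu (al / be)) =
     c * D + (al^+6 + 2 * al^+5 * be + 4 * al^+4 * be^+2 + 8 * al^+3 * be^+3 + 9 * al^+2 * be^+4 + 4 * al * be^+5 + be^+6).
    rewrite /D /Pu; field; exact: b0.
  by rewrite hG mulr0 in e; apply/eqP; rewrite -subr_eq0 opprK eq_sym; apply/eqP.
have -> : ((2 * a * b * (a + b))^+6)%:~R = D^+3 by rewrite /D /al /be; ring.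
have -> : (c^+3 + 2 * c^+2 + c + 1) * D^+3 = (c * D)^+3 + 2 * (c * D)^+2 * D + (c * D) * D^+2 + D^+3 by ring.
rewrite hz /D /al /be /pA /pB /pC /pR; ring.
Qed.

Lemma final_step (E : rat) (a b : int) (p : nat) : prime p ->
  E * ((2 * a * b * (a + b))^+6)%:~R = (pA a b * pB a b * pC a b * pR a b)%:~R ->
  (p %| pA a b * pB a b * pC a b * pR a b)%Z /\ ~ (p %| 2 * a * b * (a + b))%Z ->
  (p %| `|numq E|)%N.
Proof.
move=> pp K [h1 h2].
have KI : numq E * (2 * a * b * (a + b))^+6 = pA a b * pB a b * pC a b * pR a b * denq E.
  by apply: (@intr_inj rat); rewrite [LHS]intrM [RHS]intrM numqE mulrAC K.
have : (p %| numq E * (2 * a * b * (a + b))^+6)%Z by rewrite KI; apply: dvdz_mulr.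
case/(@pdvdM p _ _ pp) => [|/(@pdvdX p _ _ pp)] //.
Qed.

Arguments cycle_param {c}.
Arguments key_rat {c a b}.
Arguments core {a b}.
Arguments final_step {E a b p}.

Theorem corollary2 (c : rat) :
  has_rational_3cycle c ->
  exists p1 p2 p3 : nat,
    [/\ prime p1, prime p2 & prime p3] /\
    [/\ p1 != p2, p1 != p3 & p2 != p3] /\
    [/\ (p1 %| `|numq (c ^+ 3 + 2 * c ^+ 2 + c + 1)|)%N,
        (p2 %| `|numq (c ^+ 3 + 2 * c ^+ 2 + c + 1)|)%N &
        (p3 %| `|numq (c ^+ 3 + 2 * c ^+ 2 + c + 1)|)%N].
Proof.
move=> H; have [u [u0 [u1 hG]]] := cycle_param H.
set a := numq u; set b := denq u.
have hb : 0 < b := denq_gt0 u.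
have ha : a != 0 by rewrite numq_eq0.
have eu : u = a%:~R / b%:~R by rewrite divq_num_den.
have b0 : (b%:~R : rat) != 0 by rewrite intr_eq0 lt0r_neq0.
have hs : a + b != 0.
  apply/eqP => e; move/eqP: u1; apply.
  have ab : a = - b by apply/eqP; rewrite -addr_eq0; apply/eqP.
  rewrite eu ab mulrNz mulNr divff // addNr //.
have cp : coprime `|a| `|b| := coprime_num_den u.
rewrite eu in hG; have K := key_rat b0 hG.
have [p1 [p2 [p3 [hp [hd [g1 g2 g3]]]]]] := core hb ha hs cp.
case: hp => pp1 pp2 pp3.
exists p1, p2, p3; split => //; split => //; split.
- exact: final_step pp1 K g1.
- exact: final_step pp2 K g2.
- exact: final_step pp3 K g3.
Qed.
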